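(* There is $C_{\boldsymbol\tau,\boldsymbol\eta}>0$ such that for any zero-average $f,g\in W_0^\infty(\mathbb T^{2n})$ with $L_{\boldsymbol\tau}g=L_{\boldsymbol\eta}f$, there is $P\in W^\infty(\mathbb T^{2n})$ with $L_{\boldsymbol\tau}P=f$, $L_{\boldsymbol\eta}P=g$, and for all $s\ge0$, $\|P\|_s\le C_{\boldsymbol\tau,\boldsymbol\eta}(\|f\|_{s+2\gamma}+\|g\|_{s+2\gamma})$.
   Context: $\boldsymbol\tau=(\tau_1,\dots,\tau_n,0,\dots,0)$, $\boldsymbol\eta=(0,\dots,0,\eta_1,\dots,\eta_n)\in\mathbb R^{2n}$, $n\ge2$, with $\sum\tau_j\eta_j=0$, Diophantine: there are $c,\gamma>0$ with $|\boldsymbol\tau\cdot\mathbf m-p|>c|\mathbf m_1\cdot\mathbf m_1|^{-\gamma}$ if $\mathbf m_1\ne0$ and $|\boldsymbol\eta\cdot\mathbf m-p|>c|\mathbf m_2\cdot\mathbf m_2|^{-\gamma}$ if $\mathbf m_2\ne0$, for $\mathbf m=(\mathbf m_1,\mathbf m_2)\in\mathbb Z^n\times\mathbb Z^n$, $p\in\mathbb Z$. On $L^2(\mathbb T^{2n})$ write $f=\sum_{\mathbf m}f_{\mathbf m}e^{2\pi i\mathbf m\cdot(\mathbf x,\boldsymbol\xi)}$, $\|f\|_s^2=\sum_{\mathbf m}(1+4\pi^2\mathbf m\cdot\mathbf m)^s|f_{\mathbf m}|^2$, $W^\infty(\mathbb T^{2n})=\bigcap_sW^s$, $W^\infty_0$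 its zero-average subspace. For $\boldsymbol\kappa\in\{\boldsymbol\tau,\boldsymbol\eta\}$, $L_{\boldsymbol\kappa}h(\mathbf x,\boldsymbol\xi)=h((\mathbf x,\boldsymbol\xi)+\boldsymbol\kappa)-h(\mathbf x,\boldsymbol\xi)$, i.e. $L_{\boldsymbol\kappa}$ multiplies the $\mathbf m$-th Fourier coefficient by $e^{2\pi i\mathbf m\cdot\boldsymbol\kappa}-1$. *)

(* Defs.v *)
From Stdlib Require Import Reals Lra ZArith List.
Open Scope R_scope.

(* Complex numbers as pairs (real part, imaginary part). *)
Definition Cpx := (R * R)%type.
Definition Cmul (a b : Cpx) : Cpx :=
  (fst a * fst b - snd a * snd b, fst a * snd b + snd a * fst b).
Definition Cnorm2 (a : Cpx) : R := fst a * fst a + snd a * snd a.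

(* A lattice point m in Z^(2n) is a list of 2n integers;
   m = (m1, m2) with m1 = firstn n m, m2 = skipn n m. *)
Definition valid (n : nat) (m : list Z) : Prop := length m = (2 * n)%nat.

Fixpoint zdot (m : list Z) (v : list R) : R :=
  match m, v with
  | a :: m', x :: v' => IZR a * x + zdot m' v'
  | _, _ => 0
  end.

Definition zsq (m : list Z) : Z := fold_right (fun a acc => (a * a + acc)%Z) 0%Z m.

Definition is_zero_vec (m : list Z) : Prop := Forall (fun a => a = 0%Z) m.

Fixpoint rdot (u v : list R) : R :=
  match u, v with
  | a :: u', b :: v' => a * b + rdot u' v'
  | _, _ => 0
  end.

(* A function on T^(2n) in L^2 is identified with its family of Fourier
   coefficients f : Z^(2n) -> C (only values at valid indices matter). *)
Definition fourier := list Z -> Cpx.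

(* m . tau with tau = (tau_1..tau_n,0..0); m . eta with eta = (0..0,eta_1..eta_n). *)
Definition dot_tau (n : nat) (tau : list R) (m : list Z) : R := zdot (firstn n m) tau.
Definition dot_eta (n : nat) (eta : list R) (m : list Z) : R := zdot (skipn n m) eta.

Definition shift_mult (theta : R) : Cpx := (cos (2 * PI * theta) - 1, sin (2 * PI * theta)).

Definition L_tau (n : nat) (tau : list R) (h : fourier) : fourier :=
  fun m => Cmul (shift_mult (dot_tau n tau m)) (h m).
Definition L_eta (n : nat) (eta : list R) (h : fourier) : fourier :=
  fun m => Cmul (shift_mult (dot_eta n eta m)) (h m).

Definition sob_weight (s : R) (m : list Z) : R :=
  Rpower (1 + 4 * PI ^ 2 * IZR (zsq m)) s.

Definition sob_partial (s : R) (f : fourier) (l : list (list Z)) : R :=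
  fold_right (fun m acc => sob_weight s m * Cnorm2 (f m) + acc) 0 l.

Definition sob_partials (n : nat) (s : R) (f : fourier) (x : R) : Prop :=
  exists l, NoDup l /\ Forall (valid n) l /\ x = sob_partial s f l.

(* N = ||f||_s^2 (the sum of the nonnegative series, as a least upper bound) *)
Definition sob_norm_sq (n : nat) (s : R) (f : fourier) (N : R) : Prop :=
  is_lub (sob_partials n s f) N.

Definition in_W (n : nat) (s : R) (f : fourier) : Prop :=
  exists B, forall x, sob_partials n s f x -> x <= B.

Definition in_Winf (n : nat) (f : fourier) : Prop := forall s, in_W n s f.

Definition zero_avg (n : nat) (f : fourier) : Prop := f (repeat 0%Z (2 * n)) = (0, 0).

Definition diophantine (n : nat) (tau eta : list R) (c gamma : R) : Prop :=
  0 < c /\ 0 < gamma /\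
  (forall (m : list Z) (p : Z), valid n m -> ~ is_zero_vec (firstn n m) ->
     Rabs (dot_tau n tau m - IZR p) > c * Rpower (IZR (zsq (firstn n m))) (- gamma)) /\
  (forall (m : list Z) (p : Z), valid n m -> ~ is_zero_vec (skipn n m) ->
     Rabs (dot_eta n eta m - IZR p) > c * Rpower (IZR (zsq (skipn n m))) (- gamma)).

(* Main.v *)
Require Import Defs.
From Stdlib Require Import Reals Lra Lia Psatz ZArith List.
Open Scope R_scope.


Lemma one_minus_cos_lb a : -PI/2 <= a -> a <= PI/2 -> a*a/3 <= 1 - cos a.
Proof.
intros H1 H2. destruct (cos_bound a 0 H1 H2) as [_ H].
unfold cos_approx, cos_term in H. simpl in H.
pose proof PI_4. pose proof PI_RGT_0.
assert (a*a <= 4) by nra.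
field_simplify in H. nra.
Qed.

Lemma cnorm_shift θ : Cnorm2 (shift_mult θ) = 2 - 2 * cos (2*PI*θ).
Proof.
unfold Cnorm2, shift_mult; simpl. pose proof (sin2_cos2 (2*PI*θ)).
unfold Rsqr in H. nra.
Qed.

Lemma trig_lb x : Rabs x <= 1/2 -> x*x <= Cnorm2 (shift_mult x).
Proof.
intros Hx. rewrite cnorm_shift.
replace (2*PI*x) with (2*(PI*x)) by ring.
rewrite cos_2a_cos.
pose proof PI_RGT_0. pose proof PI2_1.
assert (-PI/2 <= PI*x <= PI/2).
{ destruct (Rcase_abs x); [rewrite Rabs_left in Hx by lra | rewrite Rabs_right in Hx by lra]; split; nra. }
destruct H1.
pose proof (one_minus_cos_lb _ H1 H2).
assert (0 <= cos (PI*x)) by (apply cos_ge_0; lra).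
pose proof (COS_bound (PI*x)).
set (c := cos (PI*x)) in *.
assert (4*(1-c) <= 2 - 2*(2*c*c-1)) by nra.
assert (0 <= x*x*(PI*PI-1)) by (apply Rmult_le_pos; nra).
assert (x*x <= PI*x*(PI*x)/3*4) by nra.
lra.
Qed.

Lemma cos_periodZ y p : cos (y + 2 * IZR p * PI) = cos y.
Proof.
destruct p as [|q|q].
- simpl. f_equal; ring.
- assert (E : IZR (Z.pos q) = INR (Pos.to_nat q)) by (rewrite INR_IZR_INZ, positive_nat_Z; reflexivity).
  rewrite E. apply cos_period.
- replace y with ((y + 2 * IZR (Z.neg q) * PI) + 2 * INR (Pos.to_nat q) * PI) at 2.
  + symmetry; apply cos_period.
  + rewrite INR_IZR_INZ, positive_nat_Z. rewrite <- Pos2Z.opp_pos, opp_IZR. ring.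
Qed.

Lemma round_ex θ : exists p : Z, Rabs (θ - IZR p) <= 1/2.
Proof.
destruct (archimed θ) as [H1 H2].
destruct (Rle_lt_dec (IZR (up θ) - θ) (1/2)).
- exists (up θ). rewrite Rabs_left1 by lra. lra.
- exists (up θ - 1)%Z. rewrite minus_IZR. rewrite Rabs_right by lra. lra.
Qed.

Lemma mult_lb θ d : 0 <= d -> (forall p : Z, Rabs (θ - IZR p) > d) -> d*d <= Cnorm2 (shift_mult θ).
Proof.
intros Hd H. destruct (round_ex θ) as [p Hp].
specialize (H p).
assert (E: Cnorm2 (shift_mult θ) = Cnorm2 (shift_mult (θ - IZR p))).
{ rewrite !cnorm_shift. replace (2*PI*θ) with (2*PI*(θ - IZR p) + 2 * IZR p * PI) by ring.
  rewrite cos_periodZ. reflexivity. }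
rewrite E. pose proof (trig_lb _ Hp).
destruct (Rcase_abs (θ - IZR p)).
- rewrite Rabs_left in H by lra. nra.
- rewrite Rabs_right in H by lra. nra.
Qed.
Definition Cinv (b : Cpx) : Cpx := (fst b / Cnorm2 b, - snd b / Cnorm2 b).

Lemma Cmul_inv b : Cnorm2 b <> 0 -> Cmul b (Cinv b) = (1, 0).
Proof. destruct b as [x y]; unfold Cmul, Cinv, Cnorm2; simpl; intro H. f_equal; field; exact H. Qed.

Lemma Cmul_comm a b : Cmul a b = Cmul b a.
Proof. destruct a, b; unfold Cmul; simpl; f_equal; ring. Qed.

Lemma Cmul_assoc a b d : Cmul a (Cmul b d) = Cmul (Cmul a b) d.
Proof. destruct a, b, d; unfold Cmul; simpl; f_equal; ring. Qed.

Lemma Cmul_1 a : Cmul a (1,0) = a.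
Proof. destruct a; unfold Cmul; simpl; f_equal; ring. Qed.

Lemma Cmul_0 a : Cmul a (0,0) = (0,0).
Proof. destruct a; unfold Cmul; simpl; f_equal; ring. Qed.

Lemma Cmul_0l a : Cmul (0,0) a = (0,0).
Proof. destruct a; unfold Cmul; simpl; f_equal; ring. Qed.

Lemma Cnorm2_nonneg a : 0 <= Cnorm2 a.
Proof. destruct a; unfold Cnorm2; simpl; nra. Qed.

Lemma Cnorm2_mul_inv a b : Cnorm2 b <> 0 -> Cnorm2 (Cmul a (Cinv b)) = Cnorm2 a / Cnorm2 b.
Proof. destruct a as [u v], b as [x y]; unfold Cmul, Cinv, Cnorm2; simpl; intro H. field. exact H. Qed.

Lemma Cdiv_cancel a b : Cnorm2 b <> 0 -> Cmul b (Cmul a (Cinv b)) = a.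
Proof. intro H. rewrite (Cmul_comm a), Cmul_assoc, Cmul_inv by exact H.
rewrite Cmul_comm. apply Cmul_1. Qed.

Lemma Cmul_zero_inv a b : Cnorm2 a <> 0 -> Cmul a b = (0,0) -> b = (0,0).
Proof. intros H E. rewrite <- (Cmul_1 b), <- (Cmul_inv a H), Cmul_assoc, (Cmul_comm b a), E.
apply Cmul_0l. Qed.

Lemma shift0 : shift_mult 0 = (0,0).
Proof. unfold shift_mult. rewrite Rmult_0_r, cos_0, sin_0. f_equal; ring. Qed.

Definition zb (l : list Z) : bool := forallb (fun a => Z.eqb a 0) l.

Lemma zb_spec l : zb l = true <-> is_zero_vec l.
Proof.
unfold zb, is_zero_vec. rewrite forallb_forall, Forall_forall.
split; intros H x Hx; specialize (H x Hx); [apply Z.eqb_eq | apply Z.eqb_eq]; auto.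
Qed.

Lemma zdot_zero l v : is_zero_vec l -> zdot l v = 0.
Proof.
revert v; induction l as [|a l IH]; intros v H; simpl; auto.
destruct v as [|x v]; auto. inversion H; subst. rewrite IH by assumption. ring.
Qed.

Lemma zsq_nonneg l : (0 <= zsq l)%Z.
Proof. induction l; simpl; nia. Qed.

Lemma zsq_app l1 l2 : zsq (l1 ++ l2) = (zsq l1 + zsq l2)%Z.
Proof. induction l1; simpl; lia. Qed.

Lemma zsq_pos l : ~ is_zero_vec l -> (1 <= zsq l)%Z.
Proof.
induction l as [|a l IH]; intro H; simpl.
- exfalso; apply H; constructor.
- pose proof (zsq_nonneg l). destruct (Z.eq_dec a 0).
  + subst. assert (~ is_zero_vec l) by (intro; apply H; constructor; auto). specialize (IH H1). lia.
  + nia.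
Qed.

Lemma zero_repeat m : Forall (fun a => a = 0%Z) m -> m = repeat 0%Z (length m).
Proof. induction m; simpl; intro H; auto. inversion H; subst. f_equal; auto. Qed.

Lemma zero_full n m : valid n m -> is_zero_vec (firstn n m) -> is_zero_vec (skipn n m) ->
  m = repeat 0%Z (2*n).
Proof.
intros V H1 H2. unfold valid in V. rewrite <- V. apply zero_repeat.
rewrite <- (firstn_skipn n m). apply Forall_app; auto.
Qed.

Lemma Rpower_pos' x y : 0 < Rpower x y.
Proof. unfold Rpower; apply exp_pos. Qed.

Lemma inv_bound c γ θ zl W : 0 < c -> 0 < γ -> 1 <= zl -> zl <= W ->
  (forall p : Z, Rabs (θ - IZR p) > c * Rpower zl (- γ)) ->
  0 < Cnorm2 (shift_mult θ) /\ / Cnorm2 (shift_mult θ) <= / (c*c) * Rpower W (2*γ).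
Proof.
intros Hc Hg H1 H2 H.
set (r := Rpower zl (-γ)) in *.
assert (Hr : 0 < r) by apply Rpower_pos'.
assert (Hd := mult_lb θ (c*r) ltac:(nra) H).
assert (Hdd : 0 < c*r*(c*r)) by (assert (0 < c*r) by (apply Rmult_lt_0_compat; lra); nra).
split; [lra|].
assert (E : r * r = / Rpower zl (2*γ)).
{ unfold r. rewrite <- Rpower_plus, <- Rpower_Ropp. f_equal. ring. }
apply Rle_trans with (/ (c*r*(c*r))).
- apply Rinv_le_contravar; auto.
- replace (c*r*(c*r)) with (c*c*(r*r)) by ring. rewrite E.
  pose proof (Rpower_pos' zl (2*γ)).
  rewrite Rinv_mult, Rinv_inv.
  apply Rmult_le_compat_l.
  + left; apply Rinv_0_lt_compat; nra.
  + apply Rle_Rpower_l; lra.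
Qed.

Theorem proposition2p1 (n : nat) (tau eta : list R) (c gamma : R)
  (hn : (2 <= n)%nat) (htau : length tau = n) (heta : length eta = n)
  (horth : rdot tau eta = 0)
  (hdio : diophantine n tau eta c gamma) :
  exists C : R, 0 < C /\
    forall f g : fourier,
      in_Winf n f -> zero_avg n f ->
      in_Winf n g -> zero_avg n g ->
      (forall m, valid n m -> L_tau n tau g m = L_eta n eta f m) ->
      exists P : fourier,
        in_Winf n P /\
        (forall m, valid n m -> L_tau n tau P m = f m) /\
        (forall m, valid n m -> L_eta n eta P m = g m) /\
        (forall s : R, 0 <= s ->
           forall NP Nf Ng : R,
             sob_norm_sq n s P NP ->
             sob_norm_sq n (s + 2 * gamma) f Nf ->
             sob_norm_sq n (s + 2 * gamma) g Ng ->
             sqrt NP <= C * (sqrt Nf + sqrt Ng)).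
Proof.
destruct hdio as [Hc [Hgam [Dt De]]].
exists (/ c). split; [apply Rinv_0_lt_compat; lra|].
intros f g Hf Hf0 Hg Hg0 Hcomp.
set (W := fun m : list Z => 1 + 4 * PI ^ 2 * IZR (zsq m)).
assert (HW1 : forall m, valid n m -> IZR (zsq (firstn n m)) <= W m /\ IZR (zsq (skipn n m)) <= W m).
{ intros m _. unfold W.
  assert (E : zsq m = (zsq (firstn n m) + zsq (skipn n m))%Z)
    by (rewrite <- zsq_app, firstn_skipn; reflexivity).
  rewrite E, plus_IZR.
  pose proof (IZR_le _ _ (zsq_nonneg (firstn n m))).
  pose proof (IZR_le _ _ (zsq_nonneg (skipn n m))).
  pose proof PI2_1.
  assert (1 <= 4 * PI^2) by (simpl; nra).
  split; nra. }
assert (HT : forall m, valid n m -> ~ is_zero_vec (firstn n m) ->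
   0 < Cnorm2 (shift_mult (dot_tau n tau m)) /\
   / Cnorm2 (shift_mult (dot_tau n tau m)) <= / (c*c) * Rpower (W m) (2*gamma)).
{ intros m V Z. apply inv_bound with (zl := IZR (zsq (firstn n m)));
  [lra | lra | apply IZR_le, zsq_pos; auto | apply HW1; auto | intro p; apply Dt; auto]. }
assert (HE : forall m, valid n m -> ~ is_zero_vec (skipn n m) ->
   0 < Cnorm2 (shift_mult (dot_eta n eta m)) /\
   / Cnorm2 (shift_mult (dot_eta n eta m)) <= / (c*c) * Rpower (W m) (2*gamma)).
{ intros m V Z. apply inv_bound with (zl := IZR (zsq (skipn n m)));
  [lra | lra | apply IZR_le, zsq_pos; auto | apply HW1; auto | intro p; apply De; auto]. }
set (P := fun m : list Z =>
  if zb (firstn n m) then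
    (if zb (skipn n m) then (0,0) else Cmul (g m) (Cinv (shift_mult (dot_eta n eta m))))
  else Cmul (f m) (Cinv (shift_mult (dot_tau n tau m)))).
assert (HB : forall m, valid n m ->
  Cnorm2 (P m) <= / (c*c) * Rpower (W m) (2*gamma) * (Cnorm2 (f m) + Cnorm2 (g m))).
{ intros m V. pose proof (Cnorm2_nonneg (f m)). pose proof (Cnorm2_nonneg (g m)).
  assert (0 < / (c*c) * Rpower (W m) (2*gamma))
    by (apply Rmult_lt_0_compat; [apply Rinv_0_lt_compat; nra | apply Rpower_pos']).
  unfold P. destruct (zb (firstn n m)) eqn:E1.
  - destruct (zb (skipn n m)) eqn:E2.
    + unfold Cnorm2; simpl. nra.
    + assert (Z : ~ is_zero_vec (skipn n m)) by (rewrite <- zb_spec, E2; discriminate).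
      destruct (HE m V Z) as [Hp Hi].
      rewrite Cnorm2_mul_inv by lra. unfold Rdiv.
      apply Rle_trans with (Cnorm2 (g m) * (/ (c*c) * Rpower (W m) (2*gamma))).
      * apply Rmult_le_compat_l; auto.
      * nra.
  - assert (Z : ~ is_zero_vec (firstn n m)) by (rewrite <- zb_spec, E1; discriminate).
    destruct (HT m V Z) as [Hp Hi].
    rewrite Cnorm2_mul_inv by lra. unfold Rdiv.
    apply Rle_trans with (Cnorm2 (f m) * (/ (c*c) * Rpower (W m) (2*gamma))).
    * apply Rmult_le_compat_l; auto.
    * nra. }
assert (Hpart : forall s l, Forall (valid n) l ->
  sob_partial s P l <= / (c*c) * (sob_partial (s + 2*gamma) f l + sob_partial (s + 2*gamma) g l)).
{ intros s l. induction l as [|m l IH]; intro Hl; simpl.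
  - lra.
  - inversion Hl; subst. specialize (IH H2). specialize (HB m H1).
    assert (Ew : sob_weight (s + 2*gamma) m = sob_weight s m * Rpower (W m) (2*gamma))
      by (unfold sob_weight, W; apply Rpower_plus).
    rewrite Ew.
    assert (0 < sob_weight s m) by apply Rpower_pos'.
    pose proof (Rmult_le_compat_l _ _ _ (Rlt_le _ _ H) HB).
    nra. }
assert (Hlub0 : forall s h N, sob_norm_sq n s h N -> 0 <= N).
{ intros s h N [Hu _]. apply Hu. exists nil. repeat split; constructor. }
exists P. split; [|split; [|split]].
- intro s. destruct (Hf (s + 2*gamma)) as [Bf HBf]. destruct (Hg (s + 2*gamma)) as [Bg HBg].
  exists (/ (c*c) * (Bf + Bg)). intros x [l [Hnd [Hv Hx]]]. subst x.
  eapply Rle_trans; [apply Hpart; auto|].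
  apply Rmult_le_compat_l; [left; apply Rinv_0_lt_compat; nra|].
  apply Rplus_le_compat; [apply HBf | apply HBg]; exists l; auto.
- intros m V. unfold L_tau, P. destruct (zb (firstn n m)) eqn:E1.
  + assert (Z1 : is_zero_vec (firstn n m)) by (apply zb_spec; auto).
    unfold dot_tau. rewrite zdot_zero by auto. rewrite shift0, Cmul_0l.
    destruct (zb (skipn n m)) eqn:E2.
    * assert (Z2 : is_zero_vec (skipn n m)) by (apply zb_spec; auto).
      rewrite (zero_full n m V Z1 Z2). symmetry; exact Hf0.
    * assert (Z : ~ is_zero_vec (skipn n m)) by (rewrite <- zb_spec, E2; discriminate).
      destruct (HE m V Z) as [Hp _].
      symmetry. apply (Cmul_zero_inv (shift_mult (dot_eta n eta m))); [lra|].
      pose proof (Hcomp m V) as Hc'. unfold L_tau, L_eta in Hc'.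
      rewrite <- Hc'. unfold dot_tau. rewrite zdot_zero by auto. rewrite shift0. apply Cmul_0l.
  + assert (Z : ~ is_zero_vec (firstn n m)) by (rewrite <- zb_spec, E1; discriminate).
    destruct (HT m V Z) as [Hp _]. apply Cdiv_cancel. lra.
- intros m V. unfold L_eta, P. destruct (zb (firstn n m)) eqn:E1.
  + destruct (zb (skipn n m)) eqn:E2.
    * assert (Z1 : is_zero_vec (firstn n m)) by (apply zb_spec; auto).
      assert (Z2 : is_zero_vec (skipn n m)) by (apply zb_spec; auto).
      rewrite Cmul_0. rewrite (zero_full n m V Z1 Z2). symmetry; exact Hg0.
    * assert (Z : ~ is_zero_vec (skipn n m)) by (rewrite <- zb_spec, E2; discriminate).
      destruct (HE m V Z) as [Hp _]. apply Cdiv_cancel. lra.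
  + assert (Z : ~ is_zero_vec (firstn n m)) by (rewrite <- zb_spec, E1; discriminate).
    destruct (HT m V Z) as [Hp _].
    pose proof (Hcomp m V) as Hc'. unfold L_tau, L_eta in Hc'.
    rewrite Cmul_assoc, <- Hc', (Cmul_comm (shift_mult (dot_tau n tau m)) (g m)).
    rewrite <- Cmul_assoc, Cmul_inv by lra. apply Cmul_1.
- intros s _ NP Nf Ng HNP HNf HNg.
  pose proof (Hlub0 _ _ _ HNP). pose proof (Hlub0 _ _ _ HNf). pose proof (Hlub0 _ _ _ HNg).
  assert (HNPb : NP <= / (c*c) * (Nf + Ng)).
  { destruct HNP as [_ Hmin]. apply Hmin. intros x [l [Hnd [Hv Hx]]]. subst x.
    eapply Rle_trans; [apply Hpart; auto|].
    apply Rmult_le_compat_l; [left; apply Rinv_0_lt_compat; nra|].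
    destruct HNf as [Uf _]. destruct HNg as [Ug _].
    apply Rplus_le_compat; [apply Uf | apply Ug]; exists l; auto. }
  pose proof (sqrt_pos Nf). pose proof (sqrt_pos Ng).
  pose proof (sqrt_sqrt Nf H0). pose proof (sqrt_sqrt Ng H1).
  assert (Hic : 0 < / c) by (apply Rinv_0_lt_compat; lra).
  assert (Hcc : / (c*c) = /c * /c) by (apply Rinv_mult).
  set (Y := / c * (sqrt Nf + sqrt Ng)).
  assert (0 <= Y) by (unfold Y; nra).
  rewrite <- (sqrt_square Y) by auto.
  apply sqrt_le_1_alt. unfold Y. rewrite Hcc in HNPb.
  set (k := / c) in *. set (a := sqrt Nf) in *. set (b := sqrt Ng) in *.
  assert (0 <= k*k*(a*b)) by (apply Rmult_le_pos; apply Rmult_le_pos; lra).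
  rewrite <- H4, <- H5 in HNPb. nra.
Qed.
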